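(* Let $p$ be an odd prime, $\chi$ a Dirichlet character with odd conductor $f$, and $n,n',c,k$ positive integers with $n\equiv n'\pmod{p-1}$ and $c\equiv0\pmod{p-1}$. Then $$\Delta_c^k\epsilon_{n,\chi}\equiv\Delta_c^k\epsilon_{n',\chi}\pmod{p^{k+1}\mathbb Z_p[\chi]},$$ where $\Delta_c^k a_n=\sum_{j=0}^k\binom kj(-1)^{k-j}a_{n+jc}$.
   Context: $\mathbb Z_p[\chi]$ is the ring generated over $\mathbb Z_p$ by the values of $\chi$. For a primitive Dirichlet character $\psi$ of odd conductor $f_\psi$, $E_{n,\psi}$ is defined by $2\sum_{a=1}^{f_\psi}\frac{(-1)^a\psi(a)e^{at}}{e^{f_\psi t}+1}=\sum_{n\ge0}E_{n,\psi}\frac{t^n}{n!}$. Let $\omega$ be the Teichmüller character mod $p$. For $n\ge0$, $\chi_n$ is the primitive Dirichlet character associated with $a\mapsto\chi(a)\omega^{-n}(a)$ on $(\mathbb Z/\mathrm{lcm}(f,p)\mathbb Z)^\times$, and $\epsilon_{n,\chi}=(1-\chi_n(p)p^n)E_{n,\chi_n}$. *)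

(* Defs.v *)
(* All algebraic numbers live in algC (algebraic complex
   numbers); the p-adic side is encoded by a valuation v on algC extending
   the p-adic valuation of Q (equivalently, a fixed embedding Qbar -> C_p). *)
From HB Require Import structures.
From mathcomp Require Import all_boot all_order all_algebra all_field.
Set Implicit Arguments. Unset Strict Implicit. Unset Printing Implicit Defensive.
Import Order.TTheory GRing.Theory Num.Theory.
Local Open Scope ring_scope.

(* v : algC -> rat is a (rank-one) valuation on algC restricting to the
   p-adic valuation on Q (normalized v p = 1).  The value at 0 is
   irrelevant (conventionally +oo) and never used. *)
Definition padic_valuation (p : nat) (v : algC -> rat) : Prop :=
  [/\ forall x y : algC, x != 0 -> y != 0 -> v (x * y) = v x + v y,
      forall x y : algC, x != 0 -> y != 0 -> x + y != 0 ->
        Num.min (v x) (v y) <= v (x + y)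
    & v p%:R = 1].

(* x = y  mod p^m O  where O is the valuation ring of v
   (restricted to Q_p(chi) this is Z_p[chi]). *)
Definition cong_mod_pow (v : algC -> rat) (m : nat) (x y : algC) : Prop :=
  x = y \/ (m%:Q <= v (x - y)).

Definition dirichlet_char (N : nat) (chi : nat -> algC) : Prop :=
  [/\ (0 < N)%N,
      forall a b, chi (a * b)%N = chi a * chi b,
      forall a, chi (a + N)%N = chi a
    & forall a, (chi a != 0) = coprime a N].

Definition primitive_char (N : nat) (chi : nat -> algC) : Prop :=
  dirichlet_char N chi /\
  forall d : nat, (d %| N)%N -> (d < N)%N ->
    ~ (forall a, coprime a N -> a = 1 %[mod d] -> chi a = 1).

Definition teichmuller (p : nat) (v : algC -> rat) (omega : nat -> algC) : Prop :=
  forall a : nat,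
    ((p %| a)%N -> omega a = 0) /\
    (~~ (p %| a)%N -> omega a ^+ p.-1 = 1 /\
                    (omega a = a%:R \/ 0 < v (omega a - a%:R))).

Definition assoc_primitive (p f : nat) (chi omega : nat -> algC)
    (chin : nat -> nat -> algC) (fn : nat -> nat) : Prop :=
  forall m : nat, primitive_char (fn m) (chin m) /\
    forall a : nat, coprime a (lcmn f p) -> chin m a = chi a * (omega a) ^- m.

(* Generalized Euler numbers E_{n,psi}, defined by
   2 sum_{a=1}^{F} (-1)^a psi(a) e^{at} / (e^{Ft}+1) = sum_n E_{n,psi} t^n/n!.
   Multiplying by (e^{Ft}+1) and comparing coefficients of t^m/m! gives
   sum_{i<=m} C(m,i) F^{m-i} E_i + E_m = 2 sum_{a=1}^F (-1)^a psi(a) a^m,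
   i.e. the recursion below. *)
Definition euler_rhs (psi : nat -> algC) (F m : nat) : algC :=
  \sum_(1 <= a < F.+1) (-1) ^+ a * psi a * (a%:R) ^+ m.

Fixpoint euler_seq (psi : nat -> algC) (F m : nat) : seq algC :=
  match m with
  | 0 => [:: euler_rhs psi F 0]
  | m'.+1 =>
      let s := euler_seq psi F m' in
      rcons s (euler_rhs psi F m'.+1 -
               2^-1 * \sum_(i < m'.+1) 'C(m'.+1, i)%:R * (F%:R) ^+ (m'.+1 - i)
                                        * nth 0 s i)
  end.

Definition gen_euler (psi : nat -> algC) (F n : nat) : algC :=
  nth 0 (euler_seq psi F n) n.

Definition eps (p : nat) (chin : nat -> nat -> algC) (fn : nat -> nat) (m : nat) : algC :=
  (1 - chin m p * (p%:R) ^+ m) * gen_euler (chin m) (fn m) m.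

Definition Delta (c k : nat) (a : nat -> algC) (n : nat) : algC :=
  \sum_(j < k.+1) 'C(k, j)%:R * (-1) ^+ (k - j) * a (n + j * c)%N.

(* Main.v *)
Require Import Defs.
From HB Require Import structures.
From mathcomp Require Import all_boot all_order all_algebra all_field all_solvable.
From mathcomp Require Import zify ring.
Set Implicit Arguments. Unset Strict Implicit. Unset Printing Implicit Defensive.
Import Order.TTheory GRing.Theory Num.Theory.
Local Open Scope ring_scope.

Definition vge (v : algC -> rat) (r : rat) (x : algC) := x = 0 \/ r <= v x.

Section Val.
Variable (p : nat) (v : algC -> rat).
Hypothesis hv : padic_valuation p v.

Lemma vM x y : x != 0 -> y != 0 -> v (x * y) = v x + v y.
Proof. by move: hv; rewrite /padic_valuation => -[h1 h2 h3]; apply: h1. Qed.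

Lemma vD x y : x != 0 -> y != 0 -> x + y != 0 -> Num.min (v x) (v y) <= v (x + y).
Proof. by move: hv; rewrite /padic_valuation => -[h1 h2 h3]; apply: h2. Qed.

Lemma vp : v p%:R = 1. Proof. by move: hv; rewrite /padic_valuation => -[h1 h2 h3]. Qed.

Lemma v1 : v 1 = 0.
Proof.
have := vM (oner_neq0 algC) (oner_neq0 algC); rewrite mulr1 => h.
have : v 1 + v 1 = v 1 + 0 by rewrite addr0 -h.
by move/addrI.
Qed.

Lemma vX x n : x != 0 -> v (x ^+ n) = v x *+ n.
Proof.
move=> x0; elim: n => [|n IH]; first by rewrite expr0 v1 mulr0n.
by rewrite exprS vM ?expf_neq0 // IH mulrS.
Qed.

Lemma vunit x n : (0 < n)%N -> x ^+ n = 1 -> v x = 0.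
Proof.
move=> n0 h; have x0 : x != 0.
  apply/eqP=> x0; move: h; rewrite x0 expr0n.
  by case: n n0 => // n _ /=; rewrite mulr0n => /eqP; rewrite eq_sym oner_eq0.
have := vX n x0; rewrite h v1 => /esym/eqP; rewrite mulrn_eq0.
by move: h; case: n n0 => // n _ _ /= /eqP.
Qed.

Lemma vN1 : v (-1) = 0.
Proof. by apply: (@vunit _ 2) => //; rewrite expr2 mulrNN mulr1. Qed.

Lemma vN x : x != 0 -> v (- x) = v x.
Proof.
move=> x0; rewrite -mulN1r vM ?oppr_eq0 ?oner_eq0 // vN1 add0r //.
Qed.

Lemma vV x : x != 0 -> v (x ^-1) = - v x.
Proof.
move=> x0; have := vM x0 (invr_neq0 x0); rewrite mulfV // v1 => h.
by apply/eqP; rewrite -(addrI (v x) (etrans (esym h) (esym (subrr (v x))))) .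
Qed.

Lemma vge_le r s x : r <= s -> vge v s x -> vge v r x.
Proof. by move=> rs [->|h]; [left|right; apply: le_trans h]. Qed.

Lemma vge0 r : vge v r 0. Proof. by left. Qed.

Lemma vge_add r x y : vge v r x -> vge v r y -> vge v r (x + y).
Proof.
move=> [->|hx]; first by rewrite add0r.
move=> [->|hy]; first by rewrite addr0; right.
have [x0|x0] := eqVneq x 0; first by rewrite x0 add0r; right.
have [y0|y0] := eqVneq y 0; first by rewrite y0 addr0; right.
have [s0|s0] := eqVneq (x + y) 0; first by left.
right; apply: le_trans (vD x0 y0 s0).
by rewrite le_min hx hy.
Qed.

Lemma vge_opp r x : vge v r x -> vge v r (- x).
Proof.
move=> [->|h]; first by rewrite oppr0; left.
have [x0|x0] := eqVneq x 0; first by rewrite x0 oppr0; left.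
by right; rewrite vN.
Qed.

Lemma vge_sub r x y : vge v r x -> vge v r y -> vge v r (x - y).
Proof. by move=> hx hy; apply: vge_add => //; apply: vge_opp. Qed.

Lemma vge_mul r s x y : vge v r x -> vge v s y -> vge v (r + s) (x * y).
Proof.
move=> [->|hx]; first by rewrite mul0r; left.
move=> [->|hy]; first by rewrite mulr0; left.
have [x0|x0] := eqVneq x 0; first by rewrite x0 mul0r; left.
have [y0|y0] := eqVneq y 0; first by rewrite y0 mulr0; left.
by right; rewrite vM // lerD.
Qed.

Lemma vge_mul0l r x y : vge v 0 x -> vge v r y -> vge v r (x * y).
Proof. by move=> hx hy; rewrite -[r]add0r; apply: vge_mul. Qed.

Lemma vge_mul0r r x y : vge v r x -> vge v 0 y -> vge v r (x * y).
Proof. by move=> hx hy; rewrite -[r]addr0; apply: vge_mul. Qed.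

Lemma vge_sum r I (s : seq I) (P : pred I) (F : I -> algC) :
  (forall i, P i -> vge v r (F i)) -> vge v r (\sum_(i <- s | P i) F i).
Proof.
move=> h; apply: (big_ind (vge v r)) => //; first exact: vge0.
exact: vge_add.
Qed.

Lemma vge_exp r x n : vge v r x -> vge v (r *+ n) (x ^+ n).
Proof.
move=> h; elim: n => [|n IH].
  by right; rewrite expr0 v1 mulr0n.
by rewrite exprS mulrS; apply: vge_mul.
Qed.

Lemma vge1 : vge v 0 1. Proof. by right; rewrite v1. Qed.

Lemma vge_nat0 (m : nat) : vge v 0 m%:R.
Proof.
elim: m => [|m IH]; first by left.
by rewrite -addn1 natrD; apply: vge_add => //; apply: vge1.
Qed.

Lemma vge_int0 (z : int) : vge v 0 z%:~R.
Proof. by case: z => m; rewrite ?NegzE ?mulrNz; [apply: vge_nat0|apply: vge_opp; apply: vge_nat0]. Qed.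

End Val.

Section Val2.
Variable (p : nat) (v : algC -> rat).
Hypothesis hv : padic_valuation p v.
Hypothesis pp : prime p.
Hypothesis po : odd p.

Lemma p_neq0 : (p%:R : algC) != 0.
Proof. by rewrite pnatr_eq0 -lt0n prime_gt0. Qed.

Lemma vge_pX N : vge v N%:R ((p%:R : algC) ^+ N).
Proof. by right; rewrite (vX hv) ?p_neq0 // (vp hv). Qed.

Lemma vge_natdvd N (z : nat) : (p ^ N %| z)%N -> vge v N%:R (z%:R : algC).
Proof.
move=> /dvdnP [w ->]; rewrite natrM natrX -[N%:R]add0r.
by apply: (vge_mul hv); [apply: (vge_nat0 hv) | apply: vge_pX].
Qed.

Lemma not_vge1 r : 0 < r -> ~ vge v r 1.
Proof.
move=> r0 [/eqP|h]; first by rewrite oner_eq0.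
by move: h; rewrite (v1 hv) leNgt r0.
Qed.

Lemma vge_pos_nat r : 0 < r -> r <= 1 -> vge v r (p%:R : algC).
Proof. by move=> r0 r1; right; rewrite (vp hv). Qed.

Lemma v2_inv : vge v 0 (2^-1 : algC).
Proof.
have n20 : (2 : algC) != 0 by rewrite pnatr_eq0.
right; rewrite (vV hv) // oppr_ge0 leNgt; apply/negP => v2.
pose r := Num.min 1 (v 2).
have r0 : 0 < r by rewrite lt_min v2 ltr01.
apply: (not_vge1 r0).
have -> : (1 : algC) = p%:R - 2 * (p./2)%:R.
  have h2 : (p = 2 * p./2 + 1)%N by have := odd_double_half p; rewrite po -mul2n; lia.
  rewrite -natrM -natrB; last lia.
  by rewrite (_ : (p - 2 * p./2 = 1)%N) //; lia.
apply: (vge_sub hv); first by right; rewrite (vp hv) ge_min lexx.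
apply: (vge_mul0r hv); last exact: (vge_nat0 hv).
by right; rewrite ge_min lexx orbT.
Qed.

Lemma not_vge_pm1 r : 0 < r -> ~ vge v r ((p.-1)%:R : algC).
Proof.
move=> r0 h.
pose s := Num.min 1 r.
have s0 : 0 < s by rewrite lt_min r0 ltr01.
apply: (not_vge1 s0).
have -> : (1 : algC) = p%:R - (p.-1)%:R.
  by rewrite -natrB ?leq_pred // -subn1 subKn // prime_gt0.
apply: (vge_sub hv); first by right; rewrite (vp hv) ge_min lexx.
by apply: vge_le h; rewrite ge_min lexx orbT.
Qed.

Lemma root1_eq1 (z : algC) r : z ^+ p.-1 = 1 -> 0 < r -> vge v r (z - 1) -> z = 1.
Proof.
move=> zp r0 hz; apply/eqP/negP => /negP z1.
have p1 : (0 < p.-1)%N by have := prime_gt1 pp; lia.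
have vz : v z = 0 := vunit hv p1 zp.
have z0 : z != 0 by apply/eqP=> z0; move: zp; rewrite z0 expr0n; case: (p.-1) p1 => // ? _ /= /eqP; rewrite mulr0n eq_sym oner_eq0.
have zi i : vge v 0 (z ^+ i) by right; rewrite (vX hv) // vz mul0rn.
have hs : \sum_(i < p.-1) z ^+ i = 0.
  have := subrX1 z p.-1; rewrite zp subrr => /esym/eqP; rewrite mulf_eq0 subr_eq0.
  by rewrite (negbTE z1) => /eqP.
apply: (not_vge_pm1 r0).
have : vge v r (\sum_(i < p.-1) (z ^+ i - 1)).
  apply: (vge_sum hv) => i _; rewrite subrX1; apply: (vge_mul0r hv) => //.
  by apply: (vge_sum hv) => j _; apply: zi.
rewrite sumrB hs sumr_const card_ord sub0r => /(vge_opp hv); rewrite opprK.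
by [].
Qed.

End Val2.

Section Teich.
Variable (p : nat) (v : algC -> rat) (omega : nat -> algC).
Hypothesis hv : padic_valuation p v.
Hypothesis pp : prime p.
Hypothesis po : odd p.
Hypothesis ht : teichmuller p v omega.

Lemma omega_pow a : ~~ (p %| a)%N -> omega a ^+ p.-1 = 1.
Proof. by move=> pa; have [_ /(_ pa) []] := ht a. Qed.

Lemma omega_neq0 a : ~~ (p %| a)%N -> omega a != 0.
Proof.
move=> pa; apply/eqP=> h; have := omega_pow pa; rewrite h expr0n.
have p1 : (0 < p.-1)%N by have := prime_gt1 pp; lia.
by case: (p.-1) p1 => // ? _ /= /eqP; rewrite mulr0n eq_sym oner_eq0.
Qed.

Lemma v_omega a : ~~ (p %| a)%N -> v (omega a) = 0.
Proof.
move=> pa; apply: (vunit hv _ (omega_pow pa)).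
by have := prime_gt1 pp; lia.
Qed.

Lemma vge_omegaX a n : ~~ (p %| a)%N -> vge v 0 (omega a ^+ n).
Proof. by move=> pa; right; rewrite (vX hv) ?omega_neq0 // v_omega // mul0rn. Qed.

Lemma vge_omegaV a n : ~~ (p %| a)%N -> vge v 0 (omega a ^- n).
Proof.
move=> pa; right; rewrite (vV hv) ?expf_neq0 ?omega_neq0 //.
by rewrite (vX hv) ?omega_neq0 // v_omega // mul0rn oppr0.
Qed.

Lemma omega1 b : (b %% p = 1)%N -> omega b = 1.
Proof.
move=> bp.
have p1 := prime_gt1 pp.
have pb : ~~ (p %| b)%N by rewrite /dvdn bp.
have [_ /(_ pb) [zp hz]] := ht b.
have b1 : (1 <= b)%N by move: bp; case: (b) => //; rewrite mod0n.
have hb : vge v 1 (b%:R - 1 : algC).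
  have -> : (b%:R - 1 : algC) = (b - 1)%:R by rewrite natrB.
  have := (vge_natdvd hv pp (N := 1) (z := (b - 1)%N)); apply; rewrite expn1.
  by rewrite -(eqn_mod_dvd _ b1) bp modn_small.
case: hz => [hz|hz].
  by apply: (root1_eq1 (r := 1) hv pp po zp) => //; rewrite hz.
pose r := Num.min 1 (v (omega b - b%:R)).
have r0 : 0 < r by rewrite lt_min hz ltr01.
apply: (root1_eq1 hv pp po zp r0).
have -> : omega b - 1 = (omega b - b%:R) + (b%:R - 1) by rewrite addrA subrK.
apply: (vge_add hv); first by right; rewrite ge_min lexx orbT.
by apply: vge_le hb; rewrite ge_min lexx.
Qed.

End Teich.

Section Chr.
Variable (N : nat) (psi : nat -> algC).
Hypothesis hd : dirichlet_char N psi.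

Lemma chr_gt0 : (0 < N)%N. Proof. by move: hd; rewrite /dirichlet_char => -[]. Qed.
Lemma chrM a b : psi (a * b)%N = psi a * psi b. Proof. by move: hd; rewrite /dirichlet_char => -[]. Qed.
Lemma chr_per1 a : psi (a + N)%N = psi a. Proof. by move: hd; rewrite /dirichlet_char => -[]. Qed.
Lemma chr_nz a : (psi a != 0) = coprime a N. Proof. by move: hd; rewrite /dirichlet_char => -[]. Qed.

Lemma chr_per a t : psi (a + N * t)%N = psi a.
Proof.
elim: t => [|t IH]; first by rewrite muln0 addn0.
by rewrite mulnS addnCA addnC chr_per1 IH.
Qed.

Lemma chr_mod a : psi (a %% N)%N = psi a.
Proof. by rewrite [in RHS](divn_eq a N) addnC mulnC chr_per. Qed.

Lemma chr0 a : ~~ coprime a N -> psi a = 0.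
Proof. by rewrite -chr_nz negbK => /eqP. Qed.

Lemma chr1 : psi 1 = 1.
Proof.
have h1 : psi 1 != 0 by rewrite chr_nz coprime1n.
have := chrM 1 1; rewrite muln1 => h.
by apply: (mulfI h1); rewrite -h mulr1.
Qed.

Lemma chrX a k : psi (a ^ k)%N = psi a ^+ k.
Proof. by elim: k => [|k IH]; rewrite ?expn0 ?expr0 ?chr1 // expnS exprS chrM IH. Qed.

Lemma chr_cong a b : (a %% N = b %% N)%N -> psi a = psi b.
Proof. by move=> h; rewrite -chr_mod h chr_mod. Qed.

Lemma chr_root a : coprime a N -> psi a ^+ totient N = 1.
Proof.
move=> ca; rewrite -chrX -chr1; apply: chr_cong.
exact: Euler_exp_totient.
Qed.

Lemma chr_vge (p : nat) (v : algC -> rat) : padic_valuation p v -> forall a, vge v 0 (psi a).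
Proof.
move=> hv a; case: (boolP (coprime a N)) => ca; last by rewrite chr0 //; left.
right; rewrite (vunit hv _ (chr_root ca)) //.
by rewrite totient_gt0 chr_gt0.
Qed.

End Chr.

Lemma crt_shift F K a : (0 < F)%N -> (0 < K)%N -> (0 < a)%N ->
  (gcdn F K %| a - 1)%N -> exists t, ((a + F * t) %% K = 1 %% K)%N.
Proof.
move=> F0 K0 a0 hg.
case: (egcdnP K F0) => km kn hk _.
set g := gcdn F K in hk hg.
have hu : (g %| (K - 1) * a + 1)%N.
  have e : ((K - 1) * a + 1 + (a - 1) = K * a)%N by nia.
  have : (g %| K * a)%N by apply: dvdn_mulr; apply: dvdn_gcdr.
  by rewrite -e dvdn_addl.
set u := ((K - 1) * a + 1)%N in hu.
exists (km * (u %/ g))%N.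
have hw : (u %/ g * g = u)%N by rewrite divnK.
set w := (u %/ g)%N in hw *.
have -> : (a + F * (km * w) = K * (a + kn * w) + 1)%N.
  have e2 : (F * (km * w) = kn * K * w + u)%N by rewrite mulnCA mulnA hk -hw; nia.
  rewrite e2 /u; nia.
by rewrite mulnC modnMDl.
Qed.

Lemma coprime_lcmP b f p : coprime b (lcmn f p) = coprime b f && coprime b p.
Proof.
apply/idP/andP.
  by move=> h; split; apply: coprime_dvdr h; [apply: dvdn_lcml|apply: dvdn_lcmr].
move=> [h1 h2]; apply: (@coprime_dvdr _ (f * p)); last by rewrite coprimeMr h1.
by rewrite dvdn_lcm dvdn_mulr // dvdn_mull.
Qed.

Section Cond.
Variable (p : nat) (v : algC -> rat) (omega : nat -> algC)
    (f : nat) (chi : nat -> algC) (chin : nat -> nat -> algC) (fn : nat -> nat).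
Hypothesis hv : padic_valuation p v.
Hypothesis pp : prime p.
Hypothesis po : odd p.
Hypothesis ht : teichmuller p v omega.
Hypothesis hchi : primitive_char f chi.
Hypothesis hap : assoc_primitive p f chi omega chin fn.

Let L := lcmn f p.
Let hdchi : dirichlet_char f chi := hchi.1.
Let f0 : (0 < f)%N := chr_gt0 hdchi.
Let p0 : (0 < p)%N := prime_gt0 pp.
Let L0 : (0 < L)%N. Proof. by rewrite lcmn_gt0 f0 p0. Qed.

Lemma chin_prim m : primitive_char (fn m) (chin m).
Proof. by case: (hap m). Qed.

Lemma chin_dir m : dirichlet_char (fn m) (chin m).
Proof. by case: (chin_prim m). Qed.

Lemma chin_agree m a : coprime a L -> chin m a = chi a * omega a ^- m.
Proof. by case: (hap m) => _; apply. Qed.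

Lemma chin_one m b : (b %% L = 1 %% L)%N -> chin m b = 1.
Proof.
move=> hb.
have cb : coprime b L by rewrite -coprime_modl hb coprime_modl coprime1n.
rewrite chin_agree //.
have -> : chi b = 1.
  rewrite -(chr1 hdchi); apply: (chr_cong hdchi).
  by rewrite -(modn_dvdm b (dvdn_lcml f p)) hb (modn_dvdm 1 (dvdn_lcml f p)).
have -> : omega b = 1.
  apply: (omega1 hv pp po ht).
  rewrite -(modn_dvdm b (dvdn_lcmr f p)) hb (modn_dvdm 1 (dvdn_lcmr f p)).
  by rewrite modn_small // prime_gt1.
by rewrite expr1n invr1 mulr1.
Qed.

Lemma cond_dvd m : (fn m %| L)%N.
Proof.
have [hd hprim] := chin_prim m.
have F0 := chr_gt0 hd.
set F := fn m in hd hprim F0 *.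
set d := gcdn F L.
have dF : (d %| F)%N by apply: dvdn_gcdl.
case: (ltngtP d F) => [lt|gt|eq]; last by rewrite -eq dvdn_gcdr.
  exfalso; apply: (hprim d dF lt) => a ca ha.
  have a0 : (0 < a)%N.
    case: a ca ha => // ca; exfalso.
    move: ca; rewrite /coprime gcd0n => /eqP F1.
    have : (0 < d)%N by rewrite gcdn_gt0 F0.
    by move: lt; rewrite F1; lia.
  have hda : (d %| a - 1)%N.
    by rewrite -eqn_mod_dvd // ha.
  have [t ht'] := crt_shift F0 L0 a0 hda.
  rewrite -(chr_per hd a t); exact: chin_one.
by move: gt; rewrite ltnNge dvdn_leq.
Qed.

Lemma cond_prime m q : prime q -> (q %| f)%N -> q != p -> (q %| fn m)%N.
Proof.
move=> qp qf qnp; apply/negP => /negP nqF.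
have [hd _] := chin_prim m.
have F0 := chr_gt0 hd.
set F := fn m in hd nqF F0 *.
set d := (f %/ q)%N.
have fqd : f = (d * q)%N by rewrite divnK.
have q1 := prime_gt1 qp.
have df : (d %| f)%N by rewrite fqd dvdn_mulr.
have dlt : (d < f)%N by apply: ltn_Pdiv.
apply: (hchi.2 d df dlt) => a ca ha.
have a0 : (0 < a)%N.
  case: a ca ha => // ca; exfalso.
  move: ca; rewrite /coprime gcd0n => /eqP f1.
  by move: qf; rewrite f1 dvdn1 => /eqP q1'; move: q1; rewrite q1'.
set K := lcmn F p.
have K0 : (0 < K)%N by rewrite lcmn_gt0 F0 p0.
have cqK : coprime q K.
  rewrite prime_coprime //; apply/negP => qK.
  have : (q %| F * p)%N by apply: dvdn_trans qK _; rewrite dvdn_lcm dvdn_mulr // dvdn_mull.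
  rewrite Euclid_dvdM // (negbTE nqF) /= dvdn_prime2 //.
  by rewrite (negbTE qnp).
have hg : (gcdn f K %| a - 1)%N.
  have gd : (gcdn f K %| d)%N.
    have : (gcdn f K %| d * q)%N by rewrite -fqd dvdn_gcdl.
    rewrite Gauss_dvdl //.
    by apply: (coprime_dvdl (dvdn_gcdr f K)); rewrite coprime_sym.
  apply: dvdn_trans gd _.
  by rewrite -eqn_mod_dvd // ha.
have [t hb] := crt_shift f0 K0 a0 hg.
set b := (a + f * t)%N in hb.
have hb1 : chin m b = 1.
  rewrite -(chr1 hd); apply: (chr_cong hd).
  by rewrite -(modn_dvdm b (dvdn_lcml F p)) hb (modn_dvdm 1 (dvdn_lcml F p)).
have hbp : (b %% p = 1)%N.
  rewrite -(modn_dvdm b (dvdn_lcmr F p)) hb (modn_dvdm 1 (dvdn_lcmr F p)).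
  by rewrite modn_small // prime_gt1.
have cb : coprime b L.
  rewrite coprime_lcmP; apply/andP; split.
    by rewrite /b -coprime_modl mulnC addnC modnMDl coprime_modl.
  by rewrite -coprime_modl hbp coprime1n.
have := chin_agree m cb; rewrite hb1 (omega1 hv pp po ht hbp) expr1n invr1 mulr1.
by rewrite /b (chr_per hdchi) => <-.
Qed.

Lemma chin_val m a : ~~ (p %| a)%N -> chin m a = chi a * omega a ^- m.
Proof.
move=> pa.
have cap : coprime a p by rewrite coprime_sym prime_coprime.
case: (boolP (coprime a L)) => caL; first exact: chin_agree.
have naf : ~~ coprime a f by move: caL; rewrite coprime_lcmP cap andbT.
rewrite (chr0 hdchi naf) mul0r.
have [hd _] := chin_prim m.
apply: (chr0 hd); apply/negP => caF.
have g1 : (1 < gcdn a f)%N.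
  have : (0 < gcdn a f)%N by rewrite gcdn_gt0 f0 orbT.
  by move: naf; rewrite /coprime; lia.
set q := pdiv (gcdn a f).
have qp : prime q by apply: pdiv_prime.
have qg : (q %| gcdn a f)%N := pdiv_dvd _.
have qa : (q %| a)%N by apply: dvdn_trans qg (dvdn_gcdl _ _).
have qf : (q %| f)%N by apply: dvdn_trans qg (dvdn_gcdr _ _).
have qnp : q != p by apply/eqP => e; move: pa; rewrite -e qa.
have qF := cond_prime m qp qf qnp.
move: caF; rewrite /coprime => /eqP g.
have : (q %| gcdn a (fn m))%N by rewrite dvdn_gcd qa qF.
by rewrite g dvdn1 => /eqP e; move: qp; rewrite e.
Qed.

End Cond.

Lemma binC2 m l i : (i <= l)%N -> (l <= m)%N ->
  ('C(m, i) * 'C(m - i, l - i) = 'C(m, l) * 'C(l, i))%N.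
Proof.
move=> il lm.
have h1 := bin_fact (leq_trans il lm).
have h2 : ('C(m - i, l - i) * ((l - i)`! * (m - l)`!) = (m - i)`!)%N.
  rewrite -(bin_fact (_ : l - i <= m - i)%N); last lia.
  by rewrite (_ : (m - i - (l - i) = m - l)%N) //; lia.
have h3 := bin_fact il.
have h4 := bin_fact lm.
have X0 : (0 < i`! * (l - i)`! * (m - l)`!)%N by rewrite !muln_gt0 !fact_gt0.
apply/eqP; rewrite -(eqn_pmul2r X0); apply/eqP.
transitivity (m`!).
  by rewrite -h1 -h2; ring.
by rewrite -h4 -h3; ring.
Qed.

Lemma appell_gen (e : nat -> algC) m (x y : algC) :
  \sum_(l < m.+1) 'C(m, l)%:R * y ^+ (m - l) *
       (\sum_(i < l.+1) 'C(l, i)%:R * x ^+ (l - i) * e i)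
  = \sum_(i < m.+1) 'C(m, i)%:R * (x + y) ^+ (m - i) * e i.
Proof.
pose T i l := ('C(m, l) * 'C(l, i))%:R * y ^+ (m - l) * x ^+ (l - i) * e i.
transitivity (\sum_(0 <= l < m.+1) \sum_(0 <= i < l.+1) T i l).
  rewrite big_mkord; apply: eq_bigr => l _.
  rewrite big_mkord mulr_sumr; apply: eq_bigr => i _.
  by rewrite /T natrM; ring.
transitivity (\sum_(0 <= i < m.+1) \sum_(i <= l < m.+1) T i l); last first.
  rewrite big_mkord; apply: eq_bigr => -[i /= im] _.
  rewrite addrC exprDn mulr_sumr mulr_suml.
  rewrite -{1}[i]add0n big_addn (_ : (m.+1 - i = (m - i).+1)%N); last lia.
  rewrite big_mkord; apply: eq_bigr => -[k /= km] _.
  rewrite /T -(binC2 (_ : i <= k + i)%N (_ : k + i <= m)%N); [|lia|lia].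
  rewrite (_ : (k + i - i = k)%N); last lia.
  rewrite (_ : (m - (k + i) = m - i - k)%N); last lia.
  by rewrite natrM -mulr_natr; ring.
symmetry; under eq_bigr => i _ do rewrite (big_nat_widenl i 0) //.
rewrite (exchange_big_dep_nat xpredT) //.
apply: eq_big_nat => l /andP [_ lm].
by rewrite [RHS](big_nat_widen 0 l.+1 m.+1).
Qed.

Definition Pp (psi : nat -> algC) (F m : nat) (x : algC) :=
  \sum_(i < m.+1) 'C(m, i)%:R * x ^+ (m - i) * gen_euler psi F i.

Section Euler.
Variable (psi : nat -> algC) (F : nat).

Lemma size_euler_seq m : size (euler_seq psi F m) = m.+1.
Proof. by elim: m => [|m IH] //=; rewrite size_rcons IH. Qed.

Lemma nth_euler_seq m i : (i <= m)%N -> nth 0 (euler_seq psi F m) i = gen_euler psi F i.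
Proof.
elim: m i => [|m IH] i; first by rewrite leqn0 => /eqP ->.
rewrite leq_eqVlt => /orP [/eqP ->|im] //.
by rewrite /= nth_rcons size_euler_seq im IH.
Qed.

Lemma euler_rec m : gen_euler psi F m.+1 = euler_rhs psi F m.+1 -
  2^-1 * \sum_(i < m.+1) 'C(m.+1, i)%:R * (F%:R) ^+ (m.+1 - i) * gen_euler psi F i.
Proof.
rewrite {1}/gen_euler /= nth_rcons size_euler_seq ltnn eqxx.
congr (_ - 2^-1 * _); apply: eq_bigr => i _.
by rewrite nth_euler_seq // -ltnS.
Qed.

Lemma euler_rec2 m : 2 * euler_rhs psi F m = gen_euler psi F m + Pp psi F m F%:R.
Proof.
have n20 : (2 : algC) != 0 by rewrite pnatr_eq0.
case: m => [|m].
  rewrite /Pp big_ord1 /= expr0 bin0 mulr1 mul1r.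
  by rewrite {1 2}/gen_euler /= mulr2n mulrDl mul1r.
rewrite /Pp big_ord_recr /= subnn expr0 binn mulr1 mul1r.
set X := (\sum_(i < m.+1) _).
have -> : X = \sum_(i < m.+1) 'C(m.+1, i)%:R * (F%:R) ^+ (m.+1 - i) * gen_euler psi F i.
  by apply: eq_bigr.
by rewrite euler_rec; field.
Qed.

Lemma Pp_shift m (x y : algC) :
  \sum_(l < m.+1) 'C(m, l)%:R * y ^+ (m - l) * Pp psi F l x = Pp psi F m (x + y).
Proof. exact: appell_gen. Qed.

End Euler.

Definition Sa (psi : nat -> algC) (m K : nat) : algC :=
  \sum_(1 <= a < K.+1) (-1) ^+ a * psi a * (a%:R) ^+ m.

Definition Sy (psi : nat -> algC) (F m : nat) (y : algC) : algC :=
  \sum_(1 <= a < F.+1) (-1) ^+ a * psi a * (a%:R + y) ^+ m.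

Lemma sum_shift (g : nat -> algC) a b :
  \sum_(a.+1 <= i < (a + b).+1) g i = \sum_(1 <= j < b.+1) g (a + j)%N.
Proof.
rewrite (_ : a.+1 = 1 + a)%N // big_addn (_ : ((a + b).+1 - a = b.+1)%N); last lia.
by apply: eq_bigr => j _; rewrite addnC.
Qed.

Lemma sum_split3 (g : nat -> algC) K F :
  \sum_(1 <= i < (K + (F + F)).+1) g i = \sum_(1 <= i < K.+1) g i +
    \sum_(1 <= j < F.+1) g (K + j)%N + \sum_(1 <= j < F.+1) g (K + (F + j))%N.
Proof.
rewrite (@big_cat_nat _ _ _ K.+1 1 (K + (F + F)).+1) //=; last lia.
rewrite (sum_shift g K (F + F)) -addrA; congr (_ + _).
rewrite (@big_cat_nat _ _ _ F.+1 1 (F + F).+1) //=; last lia.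
by congr (_ + _); rewrite (sum_shift (fun j => g (K + j)%N) F F).
Qed.

Section EulerSum.
Variable (psi : nat -> algC) (F : nat).

Lemma Sy_eq m y : 2 * Sy psi F m y = Pp psi F m y + Pp psi F m (F%:R + y).
Proof.
rewrite /Sy; under eq_bigr => a _ do rewrite addrC exprDn mulr_sumr.
rewrite exchange_big /= mulr_sumr.
transitivity (\sum_(l < m.+1) 'C(m, l)%:R * y ^+ (m - l) * (2 * euler_rhs psi F l)).
  apply: eq_bigr => l _; rewrite /euler_rhs !mulr_sumr; apply: eq_bigr => a _.
  by rewrite -mulr_natl; ring.
under eq_bigr => l _ do rewrite euler_rec2 mulrDr.
by rewrite big_split /= Pp_shift.
Qed.

Hypothesis hd : dirichlet_char F psi.
Hypothesis Fodd : odd F.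

Lemma euler_sum m s :
  2 * Sa psi m (F * (2 * s + 1)) = gen_euler psi F m + Pp psi F m (F * (2 * s + 1))%:R.
Proof.
elim: s => [|s IH].
  by rewrite muln0 add0n muln1 -euler_rec2.
set K := (F * (2 * s + 1))%N in IH *.
have Kodd : odd K by rewrite /K oddM Fodd oddD oddM.
have -> : (F * (2 * s.+1 + 1) = K + (F + F))%N by rewrite /K; lia.
have F0 := chr_gt0 hd.
pose g a := (-1) ^+ a * psi a * (a%:R : algC) ^+ m.
rewrite /Sa (sum_split3 g) -/(Sa psi m K).

have h1 : \sum_(1 <= j < F.+1) g (K + j)%N = - Sy psi F m K%:R.
  rewrite /Sy -sumrN; apply: eq_bigr => b _.
  rewrite /g exprD -[(-1) ^+ K]signr_odd Kodd expr1 natrD addrC.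
  rewrite (_ : (K + b = b + F * (2 * s + 1))%N); last by rewrite /K addnC.
  by rewrite (chr_per hd); ring.
have h2 : \sum_(1 <= j < F.+1) g (K + (F + j))%N = Sy psi F m (F + K)%:R.
  rewrite /Sy; apply: eq_bigr => b _.
  rewrite /g addnA exprD -[(-1) ^+ (K + F)]signr_odd (_ : odd (K + F) = false); last by rewrite oddD Kodd Fodd.
  rewrite expr0 mul1r.
  rewrite (_ : (K + F + b = b + F * (2 * s + 2))%N); last by rewrite /K; lia.
  rewrite (chr_per hd); congr (_ * _ ^+ _); rewrite natrD; congr (_ + _); congr (_%:R).
  rewrite /K; lia.
rewrite h1 h2 !mulrDr IH mulrN !Sy_eq natrD.
have -> : (F%:R + (F%:R + K%:R) : algC) = (K + (F + F))%:R by rewrite !natrD; ring.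
ring.
Qed.

End EulerSum.

Definition Tsum (p : nat) (psi : nat -> algC) (m M : nat) : algC :=
  \sum_(1 <= a < M.+1 | ~~ (p %| a)%N) (-1) ^+ a * psi a * (a%:R) ^+ m.

Lemma sum_mult (p : nat) (g : nat -> algC) q : (0 < p)%N ->
  \sum_(1 <= a < (p * q).+1) (if (p %| a)%N then g a else 0) = \sum_(1 <= b < q.+1) g (p * b)%N.
Proof.
move=> p0; elim: q => [|q IH]; first by rewrite muln0 !big_geq.
rewrite (@big_cat_nat _ _ _ (p * q).+1 1 (p * q.+1).+1) //=; last by rewrite ltnS leq_mul2l leqnSn orbT.
rewrite IH [in RHS]big_nat_recr //=; congr (_ + _).
rewrite mulnS addnC (sum_shift (fun a => if (p %| a)%N then g a else 0) (p * q) p).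
rewrite big_nat_recr //= dvdn_addr ?dvdn_mulr // dvdnn.
rewrite big1_seq ?add0r // => j /andP [_]; rewrite mem_index_iota => /andP [j1 jp].
rewrite dvdn_addr ?dvdn_mulr //.
case: ifP => // pj; exfalso.
by have := dvdn_leq j1 pj; lia.
Qed.

Section Approx.
Variable (p : nat) (v : algC -> rat).
Hypothesis hv : padic_valuation p v.
Hypothesis pp : prime p.
Hypothesis po : odd p.

Lemma vge0_mul x y : vge v 0 x -> vge v 0 y -> vge v 0 (x * y).
Proof. by move=> hx hy; apply: (vge_mul0l hv). Qed.

Lemma vge0_exp x n : vge v 0 x -> vge v 0 (x ^+ n).
Proof. by move=> h; have := vge_exp hv n h; rewrite mul0rn. Qed.

Lemma vge0_sign n : vge v 0 ((-1) ^+ n : algC).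
Proof. by apply: vge0_exp; apply: (vge_opp hv); apply: (vge1 hv). Qed.

Variable (psi : nat -> algC) (F : nat).
Hypothesis hd : dirichlet_char F psi.

Lemma rhs_int m : vge v 0 (euler_rhs psi F m).
Proof.
apply: (vge_sum hv) => a _; apply: vge0_mul; last by apply: vge0_exp; apply: (vge_nat0 hv).
by apply: vge0_mul; [apply: vge0_sign | apply: (chr_vge hd hv)].
Qed.

Lemma euler_int m : vge v 0 (gen_euler psi F m).
Proof.
elim/ltn_ind: m => -[|m] IH.
  by rewrite /gen_euler /=; apply: rhs_int.
rewrite euler_rec; apply: (vge_sub hv); first exact: rhs_int.
apply: vge0_mul; first exact: (v2_inv hv pp po).
apply: (vge_sum hv) => i _; apply: vge0_mul; last by apply: IH.
by apply: vge0_mul; [apply: (vge_nat0 hv) | apply: vge0_exp; apply: (vge_nat0 hv)].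
Qed.

Hypothesis Fodd : odd F.

Lemma Sa_approx m M N : (F %| M)%N -> odd M -> (p ^ N %| M)%N ->
  vge v N%:R (Sa psi m M - gen_euler psi F m).
Proof.
move=> FM Mo pM.
have [t Mt] : exists t, M = (F * (2 * t + 1))%N.
  have ho : odd (M %/ F) by move: Mo; rewrite -{1}(divnK FM) oddM => /andP [].
  exists ((M %/ F)./2); have := odd_double_half (M %/ F); rewrite ho -mul2n.
  have := divnK FM; set d := (M %/ F)%N; set h := (d./2)%N; move=> e1 e2.
  rewrite -e1 -e2 /=; nia.
have n20 : (2 : algC) != 0 by rewrite pnatr_eq0.
have e : Sa psi m M - gen_euler psi F m = 2^-1 * (Pp psi F m M%:R - gen_euler psi F m).
  apply: (mulfI n20); rewrite mulrA mulfV // mul1r mulrBr.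
  rewrite Mt (euler_sum hd Fodd); ring.
rewrite e; apply: (vge_mul0l hv); first exact: (v2_inv hv pp po).
rewrite /Pp big_ord_recr /= subnn expr0 binn mulr1 mul1r addrK.
apply: (vge_sum hv) => -[i /= im] _.
rewrite -mulrA; apply: (vge_mul0l hv); first exact: (vge_nat0 hv).
apply: (vge_mul0r hv); last exact: euler_int.
have -> : (m - i = (m - i - 1).+1)%N by lia.
rewrite exprS; apply: (vge_mul0r hv); first exact: (vge_natdvd hv pp).
by apply: vge0_exp; apply: (vge_nat0 hv).
Qed.

Lemma eps_approx m L N0 : (F %| L)%N -> odd L -> (0 < m)%N ->
  vge v (N0.+1)%:R ((1 - psi p * (p%:R) ^+ m) * gen_euler psi F m
                     - Tsum p psi m (L * p ^ N0.+1)).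
Proof.
move=> FL Lo m0.
set M1 := (L * p ^ N0)%N.
have M1o : odd M1 by rewrite /M1 oddM Lo oddX po orbT.
have FM1 : (F %| M1)%N by rewrite /M1 dvdn_mulr.
set M := (L * p ^ N0.+1)%N.
have eM : M = (p * M1)%N by rewrite /M /M1 expnS; ring.
have Mo : odd M by rewrite eM oddM po M1o.
have FM : (F %| M)%N by rewrite eM dvdn_mull.
have hS : Sa psi m M = Tsum p psi m M + psi p * (p%:R) ^+ m * Sa psi m M1.
  rewrite /Sa /Tsum (bigID (fun a => (p %| a)%N)) /= addrC; congr (_ + _).
  rewrite big_mkcond /= eM sum_mult ?prime_gt0 // mulr_sumr.
  apply: eq_bigr => b _.
  rewrite (chrM hd) natrM exprMn exprM -[(-1) ^+ p]signr_odd po expr1.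
  by ring.
have h1 := Sa_approx m FM Mo (_ : p ^ N0.+1 %| M)%N.
have h2 := Sa_approx m FM1 M1o (_ : p ^ N0 %| M1)%N.
have -> : (1 - psi p * (p%:R) ^+ m) * gen_euler psi F m - Tsum p psi m M =
   - (Sa psi m M - gen_euler psi F m) + psi p * (p%:R) ^+ m * (Sa psi m M1 - gen_euler psi F m).
  by rewrite hS; ring.
apply: (vge_add hv); first by apply: (vge_opp hv); apply: h1; rewrite dvdn_mull.
rewrite -mulrA; apply: (vge_mul0l hv); first exact: (chr_vge hd hv).
apply: (vge_le (s := (m + N0)%:R)); first by rewrite ler_nat; lia.
rewrite natrD; apply: (vge_mul hv); first exact: (vge_pX hv pp m).
by apply: h2; rewrite dvdn_mull.
Qed.

End Approx.

Lemma fermat_mod p a m : prime p -> ~~ (p %| a)%N ->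
  (a ^ m = a ^ (m %% p.-1) %[mod p])%N.
Proof.
move=> pp pa.
have ca : coprime a p by rewrite coprime_sym prime_coprime.
have h := Euler_exp_totient ca; rewrite totient_prime // in h.
rewrite {1}(divn_eq m p.-1) expnD (mulnC (m %/ p.-1)%N) expnM -modnMml -modnXm h modnXm exp1n.
by rewrite modnMml mul1n.
Qed.

Lemma vge1_cong p v x y : padic_valuation p v -> prime p ->
  (x = y %[mod p])%N -> vge v 1 (x%:R - y%:R : algC).
Proof.
move=> hv pp hxy.
have key : forall x y : nat, (y <= x)%N -> (x = y %[mod p])%N -> vge v 1 (x%:R - y%:R : algC).
  move=> x0 y0 le e; rewrite -natrB //.
  have := vge_natdvd hv pp (N := 1) (z := (x0 - y0)%N); apply; rewrite expn1.
  by rewrite -eqn_mod_dvd // e.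
case: (leqP y x) => le; first exact: key.
rewrite -opprB; apply: (vge_opp hv); apply: key; [exact: ltnW | by rewrite hxy].
Qed.

Lemma omega_exp_mod p v omega a m : padic_valuation p v -> prime p -> odd p ->
  teichmuller p v omega -> ~~ (p %| a)%N -> omega a ^+ m = omega a ^+ (m %% p.-1).
Proof.
move=> hv pp po ht pa.
by rewrite {1}(divn_eq m p.-1) exprD mulnC exprM (omega_pow ht pa) expr1n mul1r.
Qed.

Unset Implicit Arguments.

Theorem corollary3p2 (p : nat) (v : algC -> rat) (omega : nat -> algC)
    (f : nat) (chi : nat -> algC) (chin : nat -> nat -> algC) (fn : nat -> nat)
    (n n' c k : nat) :
  prime p -> odd p ->
  padic_valuation p v -> teichmuller p v omega ->
  primitive_char f chi -> odd f ->
  assoc_primitive p f chi omega chin fn ->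
  (0 < n)%N -> (0 < n')%N -> (0 < c)%N -> (0 < k)%N ->
  n = n' %[mod p.-1] -> (p.-1 %| c)%N ->
  cong_mod_pow v k.+1 (Delta c k (eps p chin fn) n) (Delta c k (eps p chin fn) n').
Proof.
move=> pp po hv ht hchi fo hap n0 n'0 c0 k0 hnn' hc.
set L := lcmn f p.
have Lo : odd L.
  apply: (@dvdn_odd _ (f * p)); last by rewrite oddM fo po.
  by rewrite dvdn_lcm dvdn_mulr // dvdn_mull.
set M := (L * p ^ k.+1)%N.
pose T m := Tsum p (chin m) m M.
pose D m := eps p chin fn m - T m.
have hD : forall m, (0 < m)%N -> vge v (k.+1)%:R (D m).
  move=> m m0; rewrite /D /T /eps.
  have FL := cond_dvd hv pp po ht hchi hap m.
  exact: (eps_approx hv pp po (chin_dir hap m) (dvdn_odd FL Lo) k FL Lo m0).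
have hdchi : dirichlet_char f chi := hchi.1.
pose W a := (-1) ^+ a * chi a * omega a ^- n.
pose G m := \sum_(1 <= a < M.+1 | ~~ (p %| a)%N)
               W a * (a%:R) ^+ m * ((a%:R) ^+ c - 1) ^+ k.
have hT : forall m, m = n %[mod p.-1] -> Delta c k T m = G m.
  move=> m hm; rewrite /Delta /T /Tsum /G.
  under eq_bigr => j _ do rewrite mulr_sumr.
  rewrite exchange_big /=; apply: eq_bigr => a pa.
  rewrite addrC exprDn mulr_sumr; apply: eq_bigr => j _.
  rewrite (chin_val hv pp po ht hchi hap) // /W.
  have -> : omega a ^- (m + j * c) = omega a ^- n.
    rewrite (omega_exp_mod _ hv pp po ht pa) [in RHS](omega_exp_mod _ hv pp po ht pa).
    congr ((_ ^+ _)^-1); rewrite -modnDml hm modnDml.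
    by rewrite -modnDmr (eqP (_ : (j * c) %% p.-1 == 0)%N) ?addn0 // -/(dvdn _ _) dvdn_mull.
  rewrite exprD mulnC exprM -mulr_natl; ring.
have lin : forall m, Delta c k (eps p chin fn) m = Delta c k D m + Delta c k T m.
  move=> m; rewrite /Delta -big_split; apply: eq_bigr => j _; by rewrite /D /= -mulrDr subrK.
have hDD : forall m, (0 < m)%N -> vge v (k.+1)%:R (Delta c k D m).
  move=> m m0; apply: (vge_sum hv) => j _; apply: (vge_mul0l hv).
    apply: (vge0_mul hv); [exact: (vge_nat0 hv) | exact: (vge0_sign hv)].
  by apply: hD; lia.
have e : Delta c k (eps p chin fn) n - Delta c k (eps p chin fn) n' =
    (Delta c k D n - Delta c k D n') + (G n - G n').
  by rewrite !lin (hT n) // (hT n') //; ring.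
suff hfin : vge v (k.+1)%:R (Delta c k (eps p chin fn) n - Delta c k (eps p chin fn) n').
  case: hfin => [/eqP|h]; first by rewrite subr_eq0 => /eqP; left.
  by right; rewrite -[_%:Q]/((k.+1)%:R) .
rewrite e; apply: (vge_add hv); first by apply: (vge_sub hv); apply: hDD.
rewrite /G -sumrB; apply: (vge_sum hv) => a pa.
rewrite -mulrBl -mulrBr -mulrA; apply: (vge_mul0l hv).
  apply: (vge0_mul hv); last exact: (vge_omegaV hv pp po ht _ pa).
  by apply: (vge0_mul hv); [exact: (vge0_sign hv) | exact: (chr_vge hdchi hv)].
rewrite -natr1 addrC; apply: (vge_mul hv).
  rewrite -!natrX; apply: (vge1_cong hv pp).
  by rewrite (fermat_mod _ pp pa) [in RHS](fermat_mod _ pp pa) hnn'.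
apply: (vge_exp hv); have := vge1_cong (x := (a ^ c)%N) (y := 1%N) hv pp.
rewrite natrX; apply.
rewrite (fermat_mod _ pp pa) (eqP (_ : (c %% p.-1 == 0)%N)) //.
Qed.
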